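(* Let $d \geq 2$, $j \in [0,d-1]$ and $N \geq 0$. Write $q = \lfloor N/d \rfloor$, $\rho = \overline{(N)}_d$ and $c = \overline{(j - t_d(q))}_d$. Then $$\sum_{k=0}^{N} a_{j,d}(k) = \frac{dN(N+1)}{2} + \frac{q\,d(d-1)}{2} + c(\rho+1) - \frac{\rho(\rho+1)}{2} + d\max\{\rho - c, 0\}.$$
   Context: Let $d \geq 2$ be an integer. For an integer $x$, $\overline{(x)}_d$ denotes the unique integer in $[0,d-1]$ congruent to $x$ modulo $d$. For $n \geq 0$, $s_d(n)$ denotes the sum of the base-$d$ digits of $n$, and $t_d(n) = \overline{(s_d(n))}_d$. For $j \in [0,d-1]$, $(a_{j,d}(n))_{n\geq 0}$ is the strictly increasing enumeration (indexed from $n=0$) of all nonnegative integers $k$ with $s_d(k) \equiv j \pmod d$. *)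

(* Defs.v *)
From mathcomp Require Import all_boot all_order all_algebra.
Set Implicit Arguments. Unset Strict Implicit. Unset Printing Implicit Defensive.

(* Sum of base-d digits of n, computed with fuel (fuel n suffices for d >= 2). *)
Fixpoint digsum_aux (d fuel n : nat) : nat :=
  match fuel with
  | 0 => 0
  | f.+1 => if n is 0 then 0 else n %% d + digsum_aux d f (n %/ d)
  end.

Definition sd (d n : nat) : nat := digsum_aux d n n.

Definition td (d n : nat) : nat := sd d n %% d.

(* Main.v *)
Require Import Defs.
From mathcomp Require Import all_boot all_order all_algebra.
Import Order.TTheory GRing.Theory Num.Theory.
From mathcomp Require Import zify.

Lemma digsum_fuel d : 2 <= d -> forall f1 f2 n, n <= f1 -> n <= f2 ->
  digsum_aux d f1 n = digsum_aux d f2 n.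
Proof.
move=> d2; elim=> [|f1 IH] [|f2] n /= h1 h2.
- by [].
- by case: n h1 h2.
- by case: n h1 h2.
case: n h1 h2 => [//|n] h1 h2; congr (_ + _); apply: IH.
  have : n.+1 %/ d < n.+1 by apply: ltn_Pdiv.
  lia.
have : n.+1 %/ d < n.+1 by apply: ltn_Pdiv.
lia.
Qed.

Lemma sd_rec d n : 2 <= d -> sd d n = if n is 0 then 0 else n %% d + sd d (n %/ d).
Proof.
move=> d2; rewrite /sd; case: n => [//|n] /=; congr (_ + _).
apply: digsum_fuel => //.
have : n.+1 %/ d < n.+1 by apply: ltn_Pdiv.
lia.
Qed.

Lemma sd_step d m r : 2 <= d -> r < d -> sd d (m * d + r) = sd d m + r.
Proof.
move=> d2 rd; rewrite (sd_rec d (m * d + r) d2).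
case E: (m * d + r) => [|k].
  have -> : m = 0 by nia.
  have -> : r = 0 by lia.
  by rewrite /sd.
by rewrite -E modnMDl modn_small // divnMDl ?(ltn_trans _ d2) // divn_small // addn0 addnC.
Qed.

Definition cc d j n := if td d n <= j then j - td d n else j + d - td d n.

Lemma td_lt d n : 2 <= d -> td d n < d.
Proof. by move=> d2; rewrite /td ltn_pmod // (ltn_trans _ d2). Qed.

Lemma cc_lt d j n : 2 <= d -> j < d -> cc d j n < d.
Proof. move=> d2 jd; have := td_lt d n d2; rewrite /cc; case: ifP; lia. Qed.

Lemma modn_2case t r d : t < d -> r < d -> (t + r) %% d = if t + r < d then t + r else t + r - d.
Proof.
move=> td rd; case: ifP => h; first by rewrite modn_small.
have -> : t + r = 1 * d + (t + r - d) by lia.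
rewrite modnMDl modn_small; lia.
Qed.

Lemma cc_step d j m r : 2 <= d -> j < d -> r < d ->
  cc d j (m * d + r) = if r <= cc d j m then cc d j m - r else cc d j m + d - r.
Proof.
move=> d2 jd rd.
have h1 : td d (m * d + r) = (td d m + r) %% d.
  by rewrite /td sd_step // modnDml.
have t1 := td_lt d m d2.
rewrite /cc h1 modn_2case //.
case: ifP; case: ifP; case: ifP; case: ifP; lia.
Qed.

Lemma b_in d j m : 2 <= d -> j < d -> sd d (m * d + cc d j m) %% d = j.
Proof.
move=> d2 jd; rewrite sd_step ?cc_lt //.
rewrite (divn_eq (sd d m) d) -addnA modnMDl.
have := td_lt d m d2; rewrite /cc /td.
case: ifP => h t1.
  rewrite subnKC // modn_small //.
have -> : sd d m %% d + (j + d - sd d m %% d) = 1 * d + j by lia.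
rewrite modnMDl modn_small //.
Qed.

Lemma in_b d j k : 2 <= d -> j < d -> sd d k %% d = j -> k = k %/ d * d + cc d j (k %/ d).
Proof.
move=> d2 jd.
have d0 : 0 < d by lia.
rewrite {1 2}(divn_eq k d) sd_step ?ltn_pmod //.
rewrite (divn_eq (sd d (k %/ d)) d) -addnA modnMDl.
have := td_lt d (k %/ d) d2; rewrite /cc /td => t1.
have t2 : k %% d < d by rewrite ltn_pmod.
rewrite modn_2case //.
case: ifP; case: ifP; lia.
Qed.

Lemma incr_le (f : nat -> nat) : (forall m n, m < n -> f m < f n) ->
  forall m n, m <= n -> f m <= f n.
Proof.
move=> hf m n; rewrite leq_eqVlt => /orP [/eqP -> //|h].
exact: ltnW (hf _ _ h).
Qed.

Lemma enum_unique (f g : nat -> nat) :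
  (forall m n, m < n -> f m < f n) -> (forall m n, m < n -> g m < g n) ->
  (forall k, (exists n, f n = k) <-> (exists n, g n = k)) -> forall n, f n = g n.
Proof.
move=> hf hg hfg n; elim: n {-2}n (leqnn n) => [|N IH] n hn.
  have {hn} -> : n = 0 by lia.
  have [p hp] : exists p, g p = f 0 by apply/hfg; exists 0.
  have [p' hp'] : exists p, f p = g 0 by apply/hfg; exists 0.
  have := @incr_le g hg _ _ (leq0n p); have := @incr_le f hf _ _ (leq0n p'); lia.
have IH' : forall m, m < n -> f m = g m by move=> m hm; apply: IH; lia.
have [p hp] : exists p, g p = f n by apply/hfg; exists n.
have [p' hp'] : exists p, f p = g n by apply/hfg; exists n.
have pn : n <= p.
  rewrite leqNgt; apply/negP => h; have := hf _ _ h; rewrite IH' // hp; lia.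
have pn' : n <= p'.
  rewrite leqNgt; apply/negP => h; have := hg _ _ h; rewrite -IH' // hp'; lia.
have := @incr_le g hg _ _ pn; have := @incr_le f hf _ _ pn'; lia.
Qed.

Lemma b_incr d j : 2 <= d -> j < d ->
  forall m n, m < n -> m * d + cc d j m < n * d + cc d j n.
Proof.
move=> d2 jd m n mn.
have := cc_lt d j m d2 jd.
have : m.+1 * d <= n * d by rewrite leq_mul2r mn orbT.
rewrite mulSn; lia.
Qed.

Lemma a_eq d j (a : nat -> nat) : 2 <= d -> j < d ->
  (forall m n, m < n -> a m < a n) ->
  (forall k, sd d k = j %[mod d] <-> exists n, a n = k) ->
  forall n, a n = n * d + cc d j n.
Proof.
move=> d2 jd ha hs; apply: enum_unique => //; first exact: b_incr.
move=> k; rewrite -hs (modn_small jd); split.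
  move=> h; exists (k %/ d); by rewrite -in_b.
by move=> [n <-]; rewrite b_in.
Qed.

Lemma sum_id N : 2 * (\sum_(0 <= k < N.+1) k) = N * N.+1.
Proof.
elim: N => [|N IH]; first by rewrite big_nat1.
rewrite big_nat_recr //= mulnDr IH; nia.
Qed.

Lemma sum_part d j m R : 2 <= d -> j < d -> R <= d ->
  2 * (\sum_(m * d <= k < m * d + R) cc d j k) + R * (R - 1)
  = 2 * cc d j m * R + 2 * d * (R - 1 - cc d j m).
Proof.
move=> d2 jd; elim: R => [|R IH] hR.
  rewrite addn0 big_geq //; lia.
rewrite addnS big_nat_recr ?leq_addr //= cc_step //.
have := IH (ltnW hR); have := cc_lt d j m d2 jd.
set c := cc d j m; set P := \sum_(_ <= _ < _) _.
move=> hc h.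
have eR : R.+1 * (R.+1 - 1) = R * (R - 1) + 2 * R.
  case: R {IH hR P h} => [//|r]. rewrite !subn1 /=. nia.
rewrite eR mulnS.
case: ifP => hr.
  have -> : R.+1 - 1 - c = 0 by lia.
  have e2 : R - 1 - c = 0 by lia.
  rewrite e2 in h; rewrite muln0; rewrite muln0 in h; lia.
have -> : R.+1 - 1 - c = (R - 1 - c).+1 by lia.
rewrite mulnS; lia.
Qed.

Lemma sum_blocks d j q : 2 <= d -> j < d ->
  2 * (\sum_(0 <= k < q * d) cc d j k) = q * (d * (d - 1)).
Proof.
move=> d2 jd; elim: q => [|q IH]; first by rewrite mul0n big_geq.
rewrite (@big_cat_nat _ _ _ (q * d)) //=; last by rewrite leq_mul2r leqnSn orbT.
rewrite [q.+1 * d]mulSn [d + q * d]addnC.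
have := sum_part d j q d d2 jd (leqnn d).
have := cc_lt d j q d2 jd.
set c := cc d j q; set P := \sum_(_ <= _ < _ + d) _.
move=> hc h; rewrite mulnDr IH.
have e : d * (d - 1 - c) + d * c = d * (d - 1) by rewrite -mulnDr subnK //; lia.
rewrite [q.+1 * _]mulSn; lia.
Qed.

Lemma sum_idd d N : 2 * (\sum_(0 <= k < N.+1) (k * d)) = d * (N * N.+1).
Proof.
elim: N => [|N IH]; first by rewrite big_nat1; lia.
rewrite big_nat_recr //= mulnDr IH; nia.
Qed.

Lemma c_eq d j q : 2 <= d -> j < d ->
  (((j%:Z - (td d q)%:Z) %% d%:Z)%Z = (cc d j q)%:Z)%R.
Proof.
move=> d2 jd; have t1 := td_lt d q d2; rewrite /cc; case: ifP => h.
  by rewrite subzn // modz_nat modn_small //; lia.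
have -> : (j%:Z - (td d q)%:Z)%R = ((- 1) * d%:Z + (j + d - td d q)%:Z)%R.
  rewrite -subzn; last by lia.
  rewrite mulN1r PoszD; lia.
rewrite modzMDl modz_nat modn_small //; lia.
Qed.

Lemma half_eq x y : x = 2 * y -> x %/ 2 = y.
Proof. by move=> ->; rewrite mulKn. Qed.

Theorem theorem2 (d j N : nat) (a : nat -> nat) :
  2 <= d -> j < d ->
  (forall m n, m < n -> a m < a n) ->
  (forall k, sd d k = j %[mod d] <-> exists n, a n = k) ->
  let q := N %/ d in
  let rho := N %% d in
  let c : int := ((j%:Z - (td d q)%:Z) %% d%:Z)%Z in
  ((\sum_(0 <= k < N.+1) a k)%N%:Z =
     ((d * N * N.+1) %/ 2)%N%:Z + ((q * (d * d.-1)) %/ 2)%N%:Z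
     + c * (rho.+1)%:Z - ((rho * rho.+1) %/ 2)%N%:Z
     + d%:Z * Num.max (rho%:Z - c) 0)%R.
Proof.
move=> d2 jd ha hs q rho c.
have d0 : 0 < d by lia.
have ea := a_eq d j a d2 jd ha hs.
rewrite /c c_eq // {c}.
rewrite (eq_bigr _ (fun k _ => ea k)) big_split /=.
have hT := sum_id N; set T := \sum_(0 <= k < N.+1) k in hT.
have hA := sum_idd d N.
have hTd := sum_id d.-1; rewrite prednK // in hTd.
set Td := \sum_(0 <= k < d) k in hTd.
have hTr := sum_id rho; set Tr := \sum_(0 <= k < rho.+1) k in hTr.
have rd : rho < d by rewrite ltn_pmod.
have eN : N = q * d + rho by rewrite /q /rho -divn_eq.
have hB := sum_blocks d j q d2 jd.
have hP := sum_part d j q rho.+1 d2 jd rd.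
rewrite [\sum_(0 <= k < N.+1) cc d j k](@big_cat_nat _ _ _ (q * d)) /=; [| by [] | by lia].
have eP : \sum_(q * d <= k < N.+1) cc d j k = \sum_(q * d <= k < q * d + rho.+1) cc d j k.
  by rewrite addnS -eN.
rewrite eP.
rewrite -hT in hA.
rewrite subn1 [d * d.-1]mulnC -hTd in hB.
rewrite !subn1 /= [rho.+1 * rho]mulnC -hTr in hP.
set Sk := \sum_(0 <= k < N.+1) (k * d) in hA *.
set S1 := \sum_(0 <= k < q * d) cc d j k in hB *.
set P := \sum_(q * d <= k < q * d + rho.+1) cc d j k in hP *.
have -> : (d * N * N.+1) %/ 2 = d * T by apply: half_eq; rewrite -mulnA -hT; lia.
have -> : (q * (d * d.-1)) %/ 2 = q * Td by apply: half_eq; rewrite [d * d.-1]mulnC -hTd; lia.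
have -> : (rho * rho.+1) %/ 2 = Tr by apply: half_eq; rewrite -hTr.
have tc := cc_lt d j q d2 jd.
set cq := cc d j q in hP tc *.
case: (leqP rho cq) => hr.
  rewrite max_r; last by lia.
  have e0 : rho - cq = 0 by lia.
  rewrite e0 muln0 in hP.
  rewrite mulr0 addr0 -PoszM.
  lia.
rewrite max_l; last by lia.
rewrite subzn; last by lia.
rewrite -!PoszM.
move: hP; set w := rho - cq => hP.
lia.
Qed.


Print Assumptions theorem2.
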